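(* Let $(A,\cdot,[-,-])$ be a transposed Poisson algebra and $(\mu,\rho,V)$ a representation of it. Then $(-\mu^*,\rho^*,V^* )$ is a representation of $(A,\cdot,[-,-])$ if and only if $\mu([x,y])=0$ and $\rho(x\cdot y)=\mu(x)\rho(y)$ for all $x,y\in A$. In particular, $(-\mathcal{L}^*_{\cdot},\mathrm{ad}^*,A^* )$ is a representation of $(A,\cdot,[-,-])$ if and only if $[x,y\cdot z]=x\cdot[y,z]=0$ for all $x,y,z\in A$.
   Context: Finite-dimensional spaces, characteristic zero. $\mathcal{L}_\cdot(x)y=x\cdot y$, $\mathrm{ad}(x)y=[x,y]$. For linear $\rho:A\to\mathrm{End}(V)$, $\rho^*:A\to\mathrm{End}(V^* )$ is $\langle\rho^*(x)v^*,u\rangle=-\langle v^*,\rho(x)u\rangle$. Transposed Poisson algebra: $(A,\cdot)$ commutative associative, $(A,[-,-])$ Lie, $2z\cdot[x,y]=[z\cdot x,y]+[x,z\cdot y]$. A representation of a transposed Poisson algebra is $(\mu,\rho,V)$ with $\mu,\rho:A\to\mathrm{End}(V)$ linear, $\mu(x\cdot y)=\mu(x)\mu(y)$, $\rho([x,y])=\rho(x)\rho(y)-\rho(y)\rho(x)$, $2\mu(x)\rho(y)=\rho(x\cdot y)+\rho(y)\mu(x)$ and $2\mu([x,y])=\rho(x)\mu(y)-\rho(y)\mu(x)$ for all $x,y$. *)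

(* Defs.v *)
From HB Require Import structures.
From mathcomp Require Import all_boot all_order all_algebra.
Set Implicit Arguments.
Unset Strict Implicit.
Unset Printing Implicit Defensive.
Import GRing.Theory.
Local Open Scope ring_scope.

(* Finite-dimensional vector spaces over K are vectType K; End(V) = 'End(V);
   the dual space V^* is 'Hom(V, K^o) (linear forms on V). *)

Section TPA.
Variable K : fieldType.

Definition is_TPA (A : vectType K) (mul br : A -> A -> A) : Prop :=
  (forall x, linear (mul x)) /\ (forall y, linear (mul^~ y)) /\
  (forall x, linear (br x)) /\ (forall y, linear (br^~ y)) /\
      (forall x y, mul x y = mul y x) /\
      (forall x y z, mul (mul x y) z = mul x (mul y z)) /\
      (forall x, br x x = 0) /\
      (forall x y z, br x (br y z) + br y (br z x) + br z (br x y) = 0) /\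
      (forall x y z, 2%:R *: mul z (br x y) = br (mul z x) y + br x (mul z y)).

Definition is_TPA_rep (A V : vectType K) (mul br : A -> A -> A)
    (mu rho : A -> 'End(V)) : Prop :=
  linear mu /\ linear rho /\
      (forall x y, mu (mul x y) = (mu x \o mu y)%VF) /\
      (forall x y, rho (br x y) = (rho x \o rho y)%VF - (rho y \o rho x)%VF) /\
      (forall x y, 2%:R *: (mu x \o rho y)%VF = rho (mul x y) + (rho y \o mu x)%VF) /\
      (forall x y, 2%:R *: mu (br x y) = (rho x \o mu y)%VF - (rho y \o mu x)%VF).

(* dual endomorphism: <f^* v*, u> = - <v*, f u>, i.e. f^* v* = - (v* o f) *)
Definition dualEnd (V : vectType K) (f : 'End(V)) : 'End('Hom(V, K^o)) :=
  linfun (fun phi : 'Hom(V, K^o) => - (phi \o f)%VF).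

Definition dualRep (A V : vectType K) (rho : A -> 'End(V)) :
  A -> 'End('Hom(V, K^o)) := fun x => dualEnd (rho x).

Definition Lmul (A : vectType K) (mul : A -> A -> A) (x : A) : 'End(A) :=
  linfun (mul x).
Definition adj (A : vectType K) (br : A -> A -> A) (x : A) : 'End(A) :=
  linfun (br x).
End TPA.

(* Main.v *)
Require Import Defs.
From HB Require Import structures.
From mathcomp Require Import all_boot all_order all_algebra.
Import GRing.Theory.
Local Open Scope ring_scope.

Section Aux.
Variable K : fieldType.

Section Lin.
Variables (U W : lmodType K) (f : U -> W) (Hf : linear f).
Let fL : {linear U -> W} := HB.pack f (GRing.isLinear.Build K U W *:%R f Hf).
Lemma lin0 : f 0 = 0. Proof. exact: (raddf0 fL). Qed.
Lemma linD u v : f (u + v) = f u + f v. Proof. exact: (raddfD fL). Qed.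
Lemma linN u : f (- u) = - f u. Proof. exact: (raddfN fL). Qed.
Lemma linB u v : f (u - v) = f u - f v. Proof. exact: (raddfB fL). Qed.
Lemma linZ a u : f (a *: u) = a *: f u. Proof. exact: (linearZZ fL). Qed.
End Lin.

Lemma lfunE_lin (V W : vectType K) (f : V -> W) (Hf : linear f) u :
  linfun f u = f u.
Proof.
pose fL : {linear V -> W} := HB.pack f (GRing.isLinear.Build K V W *:%R f Hf).
exact: (lfunE fL u).
Qed.

Lemma DE (V : vectType K) (f : 'End(V)) phi : dualEnd f phi = - (phi \o f)%VF.
Proof.
rewrite /dualEnd lfunE_lin // => a p q.
by rewrite comp_lfunDl -comp_lfunZl opprD scalerN.
Qed.


Section D.
Variable V : vectType K.
Implicit Types f g : 'End(V).
Local Notation D := (@dualEnd K V).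

Lemma Dcomp f g : (D f \o D g)%VF = - D (g \o f)%VF.
Proof.
apply/lfunP => phi; rewrite comp_lfunE opp_lfunE !DE.
by rewrite comp_lfunNl !opprK comp_lfunA.
Qed.

Lemma DD f g : D (f + g) = D f + D g.
Proof. by apply/lfunP => phi; rewrite add_lfunE !DE comp_lfunDr opprD. Qed.

Lemma DZ a f : D (a *: f) = a *: D f.
Proof. by apply/lfunP => phi; rewrite scale_lfunE !DE -comp_lfunZr scalerN. Qed.

Lemma DN f : D (- f) = - D f.
Proof. by apply/lfunP => phi; rewrite opp_lfunE !DE comp_lfunNr. Qed.

Lemma DB f g : D (f - g) = D f - D g.
Proof. by rewrite DD DN. Qed.

Lemma sep (v : V) : (forall phi : 'Hom(V, K^o), phi v = 0) -> v = 0.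
Proof.
move=> H; rewrite (coord_vbasis (memvf v)).
apply: big1 => i _.
have -> : coord (vbasis fullv) i v =
    linfun (fun u : V => (coord (vbasis fullv) i u : K^o)) v.
  by rewrite lfunE_lin // => a u w; rewrite linearP.
by rewrite H scale0r.
Qed.

Lemma Dinj : injective D.
Proof.
move=> f g H; apply/lfunP => v; apply/eqP; rewrite -subr_eq0; apply/eqP.
apply: sep => phi.
have := congr1 (fun F => fun_of_lfun F phi) H => /=.
rewrite !DE => /oppr_inj/(congr1 (fun F => fun_of_lfun F v)).
rewrite !comp_lfunE raddfB. by move=> E; apply/eqP; rewrite subr_eq0; apply/eqP; exact: E.
Qed.

End D.
End Aux.
Arguments linD {K U W f} Hf u v.
Arguments linN {K U W f} Hf u.
Arguments linZ {K U W f} Hf a u.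

Lemma part1 (K : fieldType) (charK0 : [pchar K] =i pred0)
  (A V : vectType K) (mul br : A -> A -> A) (HA : is_TPA mul br)
  (mu rho : A -> 'End(V)) (Hrep : is_TPA_rep mul br mu rho) :
  (is_TPA_rep mul br (fun x => - dualRep mu x) (dualRep rho) <->
     (forall x y, mu (br x y) = 0) /\
     (forall x y, rho (mul x y) = (mu x \o rho y)%VF)).
Proof.
have n0 n : (n%:R == 0 :> K) = (n == 0%N) by apply: (pcharf0P K).1.
case: HA => Lml [Lmr [Lbl [Lbr [Hc [Has [Hxx [Hj Hcomp]]]]]]].
case: Hrep => Lm [Lr [Hm [Hr [H4 H5]]]].
rewrite /dualRep.
have E4 x y : 2%:R *: ((- dualEnd (mu x)) \o dualEnd (rho y))%VF =
    dualEnd (rho (mul x y)) + (dualEnd (rho y) \o (- dualEnd (mu x)))%VF <->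
    2%:R *: (rho y \o mu x)%VF = rho (mul x y) + (mu x \o rho y)%VF.
  rewrite comp_lfunNl comp_lfunNr !Dcomp !opprK -DZ -DD.
  by split=> [/Dinj|->].
have E5 x y : 2%:R *: (- dualEnd (mu (br x y))) =
    (dualEnd (rho x) \o (- dualEnd (mu y)))%VF -
    (dualEnd (rho y) \o (- dualEnd (mu x)))%VF <->
    - (2%:R *: mu (br x y)) = (mu y \o rho x)%VF - (mu x \o rho y)%VF.
  rewrite !comp_lfunNr !Dcomp !opprK scalerN -DZ -DB -DN.
  by split=> [/Dinj|->].
have C3 (a b c : 'End(V)) : a + a = c + b -> b + b = c + a -> a = b.
  move=> h1 h2.
  have h3 : (3%:R : K) *: a = 3%:R *: b.
    rewrite !scaler_nat !mulrSr !mulr0n !add0r h1 h2.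
    by rewrite -!addrA (addrC b).
  have nz : (3%:R : K) != 0 by rewrite n0.
  move/(congr1 (fun w => (3%:R : K)^-1 *: w)): h3.
  by rewrite !scalerA mulVf // !scale1r.
split.
- case=> _ [_ [_ [_ [N4 N5]]]].
  have C x y : (mu x \o rho y)%VF = (rho y \o mu x)%VF.
    have a := (E4 x y).1 (N4 x y); have b := H4 x y.
    rewrite scaler_nat mulr2n in a; rewrite scaler_nat mulr2n in b.
    by symmetry; apply: C3 a b.
  split=> x y.
  + have a := (E5 x y).1 (N5 x y).
    rewrite (C x y) (C y x) -H5 in a.
    have h : (4%:R : K) *: mu (br x y) = 0.
      by rewrite (natrD K 2 2) scalerDl -{1}a addNr.
    move/eqP: h; rewrite scaler_eq0 n0 /= => /eqP //.
  + have b := H4 x y; rewrite (C x y) scaler_nat mulr2n in b.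
    by rewrite (C x y); apply: (addIr (rho y \o mu x)%VF); rewrite -b.
- case=> B1 B2.
  have C x y : (mu x \o rho y)%VF = (rho y \o mu x)%VF.
    have b := H4 x y; rewrite B2 scaler_nat mulr2n in b.
    exact: (addrI _ b).
  split; [|split; [|split; [|split; [|split]]]].
  + move=> a u v; rewrite Lm !DD !DZ.
    by rewrite opprD scalerN.
  + by move=> a u v; rewrite Lr DD DZ.
  + move=> x y; rewrite comp_lfunNl comp_lfunNr opprK Dcomp Hm.
    by rewrite -Hm Hc Hm.
  + move=> x y; rewrite !Dcomp Hr DB opprK addrC.
    by [].
  + move=> x y; apply/E4; rewrite B2 C scaler_nat mulr2n.
    by [].
  + move=> x y; apply/E5; rewrite B1 scaler0 oppr0 (C x y) (C y x).
    by rewrite -opprB -H5 B1 scaler0 oppr0.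
Qed.

Theorem mainTheorem16 (K : fieldType) (charK0 : [pchar K] =i pred0)
  (A V : vectType K) (mul br : A -> A -> A) (HA : is_TPA mul br)
  (mu rho : A -> 'End(V)) (Hrep : is_TPA_rep mul br mu rho) :
  (is_TPA_rep mul br (fun x => - dualRep mu x) (dualRep rho) <->
     (forall x y, mu (br x y) = 0) /\
     (forall x y, rho (mul x y) = (mu x \o rho y)%VF)) /\
  (is_TPA_rep mul br (fun x => - dualRep (Lmul mul) x) (dualRep (adj br)) <->
     (forall x y z, br x (mul y z) = 0 /\ mul x (br y z) = 0)).
Proof.
split; first exact: part1.
have HA' := HA.
case: HA' => Lml [Lmr [Lbl [Lbr [Hc [Has [Hxx [Hj Hcomp]]]]]]].
have LE x z : Lmul mul x z = mul x z by rewrite /Lmul lfunE_lin.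
have AE x z : adj br x z = br x z by rewrite /adj lfunE_lin.
have anti x y : br x y = - br y x.
  have := Hxx (x + y).
  rewrite (linD (Lbr _)) !(linD (Lbl _)) !Hxx add0r addr0.
  by move/eqP; rewrite addr_eq0 => /eqP.
have Hrep' : is_TPA_rep mul br (Lmul mul) (adj br).
  split; [|split; [|split; [|split; [|split]]]].
  - move=> a u v; apply/lfunP => z.
    by rewrite add_lfunE scale_lfunE !LE (linD (Lmr z)) (linZ (Lmr z)).
  - move=> a u v; apply/lfunP => z.
    by rewrite add_lfunE scale_lfunE !AE (linD (Lbr z)) (linZ (Lbr z)).
  - by move=> x y; apply/lfunP => z; rewrite comp_lfunE !LE Has.
  - move=> x y; apply/lfunP => z.
    rewrite add_lfunE opp_lfunE !comp_lfunE !AE.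
    rewrite [br (br x y) z]anti [br x z]anti (linN (Lbl y)) opprK.
    apply/eqP; rewrite eq_sym -subr_eq0 opprK.
    by apply/eqP; apply: Hj.
  - move=> x y; apply/lfunP => z.
    by rewrite add_lfunE scale_lfunE !comp_lfunE !LE !AE Hcomp.
  - move=> x y; apply/lfunP => z.
    rewrite add_lfunE opp_lfunE scale_lfunE !comp_lfunE !LE !AE.
    rewrite (Hc (br x y) z) Hcomp (Hc y z) [br y (mul x z)]anti opprK (Hc x z).
    by rewrite addrC.
apply: (iff_trans (@part1 K charK0 A A mul br HA _ _ Hrep')).
split.
- case=> P1 P2.
  have Q1 x y z : mul (br x y) z = 0.
    by have := congr1 (fun f => fun_of_lfun f z) (P1 x y); rewrite LE zero_lfunE.
  have Q2 x y z : br (mul x y) z = mul x (br y z).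
    by have := congr1 (fun f => fun_of_lfun f z) (P2 x y); rewrite comp_lfunE AE LE AE.
  move=> x y z; split.
  + by rewrite anti Q2 Hc Q1 oppr0.
  + by rewrite Hc Q1.
- move=> P; split=> x y; apply/lfunP => z.
  + by rewrite LE zero_lfunE Hc (P z x y).2.
  + by rewrite comp_lfunE AE LE AE anti (P z x y).1 (P x y z).2 oppr0.
Qed.
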